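(* Let $(\mathcal{V},g)$ be a finite-dimensional real scalar product space, let $J_1,\dots,J_m$ be skew-adjoint endomorphisms of $\mathcal{V}$ with $J_iJ_j+J_jJ_i=-2\delta_{ij}\,\mathrm{id}$ for $1\le i,j\le m$, and let $\mu_0,\dots,\mu_m\in\mathbb{R}$. Then the (Clifford) algebraic curvature tensor $R=\mu_0R^0+\sum_{i=1}^m\mu_iR^{J_i}$ is totally Jacobi-dual.
   Context: A scalar product space is a finite-dimensional real vector space with a nondegenerate symmetric bilinear form $g$; $\varepsilon_X=g(X,X)$. $R^0(X,Y,Z,W)=g(Y,Z)g(X,W)-g(X,Z)g(Y,W)$; for skew-adjoint $J$, $R^J(X,Y,Z,W)=g(JX,Z)g(JY,W)-g(JY,Z)g(JX,W)+2g(JX,Y)g(JZ,W)$. The Jacobi operator is $\mathcal{J}_X(Y)=\sum_{i}\varepsilon_{E_i}R(Y,X,X,E_i)E_i$ for an orthonormal basis $(E_i)$. An eigenvector of $\mathcal{J}_X$ is a nonzero $Y$ with $\mathcal{J}_X(Y)=\lambda Y$, $\lambda\in\mathbb{R}$. $R$ is totally Jacobi-dual if for all $X,Y\in\mathcal{V}$ with $X\neq0$ (null or not): whenever $Y$ is an eigenvector of $\mathcal{J}_X$, then $X$ is an eigenvector of $\mathcal{J}_Y$. *)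

(* Defs.v *)
(* Real scalar product space modelled as column vectors 'cV[R]_n
   over R : realType, with scalar product g(x,y) = x^T G y, G symmetric invertible. *)
From HB Require Import structures.
From mathcomp Require Import all_boot all_order all_algebra.
From mathcomp Require Import reals.
Set Implicit Arguments. Unset Strict Implicit. Unset Printing Implicit Defensive.
Import Order.TTheory GRing.Theory Num.Theory.
Local Open Scope ring_scope.

Section Defs.
Variables (R : realType) (n : nat).
Notation V := 'cV[R]_n.

Definition gform (G : 'M[R]_n) (x y : V) : R := (x^T *m G *m y) 0 0.

Definition scalar_product (G : 'M[R]_n) : Prop := G^T = G /\ G \in unitmx.

Definition skew_adjoint (G : 'M[R]_n) (J : 'M[R]_n) : Prop :=
  forall x y : V, gform G (J *m x) y = - gform G x (J *m y).

Definition R0 (G : 'M[R]_n) (X Y Z W : V) : R :=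
  gform G Y Z * gform G X W - gform G X Z * gform G Y W.

Definition RJ (G J : 'M[R]_n) (X Y Z W : V) : R :=
  gform G (J *m X) Z * gform G (J *m Y) W - gform G (J *m Y) Z * gform G (J *m X) W
  + 2 * gform G (J *m X) Y * gform G (J *m Z) W.

Definition clifford_tensor (m : nat) (G : 'M[R]_n) (J : 'I_m -> 'M[R]_n)
  (mu0 : R) (mu : 'I_m -> R) (X Y Z W : V) : R :=
  mu0 * R0 G X Y Z W + \sum_(i < m) mu i * RJ G (J i) X Y Z W.

Definition orthonormal_basis (G : 'M[R]_n) (E : 'I_n -> V) : Prop :=
  (forall i j, i != j -> gform G (E i) (E j) = 0) /\
  (forall i, gform G (E i) (E i) = 1 \/ gform G (E i) (E i) = -1).

Definition jacobi_op (G : 'M[R]_n) (E : 'I_n -> V) (Rt : V -> V -> V -> V -> R)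
  (X Y : V) : V :=
  \sum_(i < n) (gform G (E i) (E i) * Rt Y X X (E i)) *: E i.

Definition eigenvector (A : V -> V) (Y : V) : Prop :=
  Y != 0 /\ exists lambda : R, A Y = lambda *: Y.

Definition totally_jacobi_dual (G : 'M[R]_n) (E : 'I_n -> V)
  (Rt : V -> V -> V -> V -> R) : Prop :=
  forall X Y : V, X != 0 ->
    eigenvector (jacobi_op G E Rt X) Y -> eigenvector (jacobi_op G E Rt Y) X.

End Defs.

(* Main.v *)
From HB Require Import structures.
From mathcomp Require Import all_boot all_order all_algebra.
From mathcomp Require Import reals.
From mathcomp Require Import ring lra.
Require Import Defs.
Import Order.TTheory GRing.Theory Num.Theory.
Local Open Scope ring_scope.
Section S.
Variables (R : realType) (n : nat) (G : 'M[R]_n).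
Local Notation g := (gform G).
Lemma gformDl x x' y : g (x + x') y = g x y + g x' y.
Proof. by rewrite /gform linearD /= !mulmxDl mxE. Qed.
Lemma gformZl a x y : g (a *: x) y = a * g x y.
Proof. by rewrite /gform linearZ /= -!scalemxAl mxE. Qed.
Lemma gformNl x y : g (- x) y = - g x y.
Proof. by rewrite -scaleN1r gformZl mulN1r. Qed.
Lemma gform0l y : g 0 y = 0.
Proof. by rewrite /gform trmx0 !mul0mx mxE. Qed.
Lemma gformBl x x' y : g (x - x') y = g x y - g x' y.
Proof. by rewrite gformDl gformNl. Qed.
Lemma gform_suml I (r : seq I) P (F : I -> 'cV[R]_n) y :
  g (\sum_(i <- r | P i) F i) y = \sum_(i <- r | P i) g (F i) y.
Proof. exact: (big_morph (fun x => g x y) (fun a b => gformDl a b y) (gform0l y)). Qed.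
Lemma gformC x y : G^T = G -> g x y = g y x.
Proof.
move=> hG; rewrite /gform.
rewrite -[in LHS](trmxK (x^T *m G *m y)).
rewrite [in LHS]mxE.
by rewrite !trmx_mul trmxK hG mulmxA.
Qed.
Lemma skew0 J x : G^T = G -> skew_adjoint G J -> g (J *m x) x = 0.
Proof. move=> hG hJ; have := hJ x x; rewrite [g x _]gformC // => h; lra. Qed.

Lemma P_id (E : 'I_n -> 'cV[R]_n) (Z : 'cV[R]_n) : scalar_product G -> orthonormal_basis G E ->
  \sum_i (g (E i) (E i) * g Z (E i)) *: E i = Z.
Proof.
move=> [hGs hGu] [hE1 hE2].
set P := \sum_i _; pose W := P - Z; suff: W = 0 by move/eqP; rewrite subr_eq0 => /eqP.
have hW k : g W (E k) = 0.
  rewrite /W gformBl gform_suml (bigD1 k) //= big1 ?addr0.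
    rewrite gformZl; case: (hE2 k) => ->; lra.
  by move=> i hik; rewrite gformZl (hE1 _ _ hik) mulr0.
pose M := \matrix_(i, j) E j i 0.
have hD : M^T *m G *m M = diag_mx (\row_i g (E i) (E i)).
  apply/matrixP => i j; rewrite [RHS]mxE [in RHS]mxE.
  case: eqVneq => [->|hij].
  - rewrite /gform !mxE; apply: eq_bigr => l _; rewrite !mxE; congr (_ * _).
    by apply: eq_bigr => k _; rewrite !mxE.
  - rewrite mulr0n -(hE1 _ _ hij) /gform !mxE; apply: eq_bigr => l _; rewrite !mxE; congr (_ * _).
    by apply: eq_bigr => k _; rewrite !mxE.
have hMu : M \in unitmx.
  have : M^T *m G *m M \in unitmx.
    rewrite hD unitmxE det_diag unitfE; apply/prodf_neq0 => i _; rewrite mxE.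
    by case: (hE2 i) => ->; rewrite ?oppr_eq0 oner_eq0.
  by rewrite unitmx_mul => /andP[].
have h0 : W^T *m G *m M = 0.
  apply/matrixP => i k; rewrite (ord1 i) !mxE -[RHS](hW k) /gform mxE.
  by apply: eq_bigr => l _; rewrite /M !mxE.
have h1 : W^T *m G = 0 by rewrite -(mulmxK hMu (W^T *m G)) h0 mul0mx.
have h2 : W^T = 0 by rewrite -(mulmxK hGu (W^T)) h1 mul0mx.
by rewrite -(trmxK W) h2 trmx0.
Qed.
Lemma Bsq m (J : 'I_m -> 'M[R]_n) (b : 'I_m -> R) :
  (forall i j : 'I_m, J i *m J j + J j *m J i = (if i == j then - (2%:M) else 0)) ->
  (\sum_i b i *: J i) *m (\sum_i b i *: J i) = (- \sum_i b i ^+ 2)%:M.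
Proof.
move=> hC.
have e : (\sum_i b i *: J i) *m (\sum_i b i *: J i) =
   \sum_i \sum_j (b i * b j) *: (J i *m J j).
  rewrite mulmx_suml; apply: eq_bigr => i _; rewrite mulmx_sumr.
  by apply: eq_bigr => j _; rewrite -scalemxAl -scalemxAr scalerA.
set S := \sum_i _ in e.
set T := (- \sum_i b i ^+ 2)%:M.
have e2 : S + S = T + T.
  rewrite {2}/S exchange_big /= /S -big_split /=.
  rewrite /T -sumrN raddf_sum -big_split /=.
  apply: eq_bigr => i _; rewrite -big_split /= (bigD1 i) //= big1.
    rewrite addr0 -scalerDr hC eqxx -raddfD /= scalerN scale_scalar_mx -raddfN /=.
    congr (_%:M); ring.
  by move=> j hji; rewrite [b j * _]mulrC -scalerDr hC eq_sym (negbTE hji) scaler0.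
have e3 : (2:R) *: S = 2 *: T by rewrite !scaler_nat !mulr2n.
rewrite e -[S](scalerK (a:=2) _) ?e3 ?scalerK // pnatr_eq0.
all: by [].
Qed.
Definition Bm m (J : 'I_m -> 'M[R]_n) (mu : 'I_m -> R) (X Y : 'cV[R]_n) :=
  \sum_i (mu i * g (J i *m Y) X) *: J i.
Arguments Bm {m}.
Definition Vec m (J : 'I_m -> 'M[R]_n) mu0 (mu : 'I_m -> R) (X Y : 'cV[R]_n) :=
  (mu0 * g X X) *: Y - (mu0 * g Y X) *: X + 3 *: (Bm J mu X Y *m X).

Arguments Vec {m}.
Lemma tensor_eq m (J : 'I_m -> 'M[R]_n) mu0 mu X Y W :
  G^T = G -> (forall i, skew_adjoint G (J i)) ->
  clifford_tensor G J mu0 mu Y X X W = g (Vec J mu0 mu X Y) W.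
Proof.
move=> hGs hJ.
rewrite /clifford_tensor /Vec /Bm !gformDl gformNl !gformZl mulmx_suml gform_suml.
rewrite mulr_sumr; congr (_ + _); first by rewrite /R0; ring.
apply: eq_bigr => i _; rewrite -scalemxAl gformZl /RJ skew0 //; ring.
Qed.

Lemma jac_eq m (J : 'I_m -> 'M[R]_n) mu0 mu E X Y :
  scalar_product G -> (forall i, skew_adjoint G (J i)) -> orthonormal_basis G E ->
  jacobi_op G E (clifford_tensor G J mu0 mu) X Y = Vec J mu0 mu X Y.
Proof.
move=> hG hJ hE; rewrite /jacobi_op.
have hGs : G^T = G by case: hG.
under eq_bigr do rewrite (tensor_eq _ _ _ _ _ _ _ hGs hJ).
exact: P_id.
Qed.
End S.
Arguments Bm {R n} G {m}.
Arguments Vec {R n} G {m}.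
Arguments gformC {R n G}.
Arguments jac_eq {R n G m}.
Arguments Bsq {R n m}.

Theorem mainTheorem5 (R : realType) (n m : nat) (G : 'M[R]_n)
  (J : 'I_m -> 'M[R]_n) (mu0 : R) (mu : 'I_m -> R) (E : 'I_n -> 'cV[R]_n) :
  scalar_product G ->
  (forall i, skew_adjoint G (J i)) ->
  (forall i j : 'I_m,
     J i *m J j + J j *m J i = (if i == j then - (2%:M) else 0)) ->
  orthonormal_basis G E ->
  totally_jacobi_dual G E (clifford_tensor G J mu0 mu).
Proof.
move=> hG hJ hC hE X Y hX [hY [l hl]].
have hGs : G^T = G by case: hG.
rewrite jac_eq // in hl; split => //; rewrite jac_eq //.
set B := Bm G J mu X Y.
have hBYX : Bm G J mu Y X = - B.
  rewrite /B /Bm -sumrN; apply: eq_bigr => i _; rewrite -scaleNr; congr (_ *: _).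
  by rewrite (hJ i) (gformC _ (J i *m Y)) // mulrN.
set s := \sum_i (mu i * gform G (J i *m Y) X) ^+ 2.
have hBB v : B *m (B *m v) = (- s) *: v by rewrite mulmxA /B /Bm Bsq // mul_scalar_mx.
set c := mu0 * gform G X X - l.
set a := mu0 * gform G Y X.
have e1 : c *: Y = a *: X - 3 *: (B *m X).
  apply/matrixP => k j; have := congr1 (fun M : 'M[R]_(n,1) => M k j) hl; rewrite /Vec !mxE -/B => h.
  rewrite /c /a; lra.
have e1k k : c * Y k 0 = a * X k 0 - 3 * (B *m X) k 0.
  by have := congr1 (fun M : 'M[R]_(n,1) => M k 0) e1; rewrite !mxE.
have e2k k : c * (B *m Y) k 0 = a * (B *m X) k 0 - 3 * (B *m (B *m X)) k 0.
  have := congr1 (fun M : 'M[R]_(n,1) => M k 0) (congr1 (mulmx B) e1).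
  by rewrite -scalemxAr mulmxBr -!scalemxAr !mxE.
set K := c * mu0 * gform G Y Y - a ^+ 2 - 9 * s.
have key k : c * (Vec G J mu0 mu Y X) k 0 = K * X k 0.
 have -> : (Vec G J mu0 mu Y X) k 0 = mu0 * gform G Y Y * X k 0 - a * Y k 0 + 3 * - (B *m Y) k 0.
    by rewrite /Vec hBYX mulNmx !mxE (gformC X Y hGs) -/a.
      have -> : c * (mu0 * gform G Y Y * X k 0 - a * Y k 0 + 3 * - (B *m Y) k 0)
      = c * mu0 * gform G Y Y * X k 0 - a * (c * Y k 0) - 3 * (c * (B *m Y) k 0) by ring.
  rewrite e1k e2k hBB !mxE /K; ring.
have [k hk] : exists k, X k 0 != 0.
  apply/existsP; apply: contraR hX => /existsPn h.
  apply/eqP/matrixP => i j; rewrite (ord1 j) !mxE; exact/eqP/negPn/h.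
case: (eqVneq c 0) => hc.
- have hK : K = 0.
    have := key k; rewrite hc mul0r => /esym/eqP; rewrite mulf_eq0 (negbTE hk) orbF.
    by move/eqP.
  have s0 : 0 <= s by apply: sumr_ge0 => i _; exact: sqr_ge0.
  have a0 : 0 <= a ^+ 2 by exact: sqr_ge0.
  move: hK; rewrite /K hc !mul0r sub0r => hK.
  have hs : s = 0 by lra.
  have ha : a = 0 by apply/eqP; rewrite -sqrf_eq0; apply/eqP; lra.
  have hB : B = 0.
    rewrite /B /Bm big1 // => i _.
    have := psumr_eq0P (fun i _ => sqr_ge0 (mu i * gform G (J i *m Y) X)) hs; move=> /(_ i isT).
    by move/eqP; rewrite sqrf_eq0 => /eqP ->; rewrite scale0r.
  exists (mu0 * gform G Y Y); apply/matrixP => i j; rewrite (ord1 j).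
  rewrite /Vec hBYX hB oppr0 mul0mx !mxE (gformC X Y hGs) -/a ha; ring.
- exists (K / c); apply/matrixP => i j; rewrite (ord1 j) [RHS]mxE.
  have := key i => h; apply: (mulfI hc); rewrite h; field.
by [].
Qed.
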